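(* Let $X$ be a finite set with $n\ge1$ elements. The number of uniformizable topologies on $X$, and also the number of topologies on $X$ that are both uniformizable and functional Alexandroff, equals the Bell number $B_n$ (the number of partitions of $X$), where $B_0=B_1=1$ and $B_{k+1}=\sum_{i=0}^{k}\binom{k}{i}B_i$ for $k\ge1$.
   Context: A topology on $X$ is uniformizable if it is induced by some uniform structure on $X$. For $f:X\to X$ and $a\in X$ let $V_f(a):=\{x\in X:\exists n\ge0,\ f^n(x)=a\}$; the topology with basis $\{V_f(a):a\in X\}$ is the functional Alexandroff topology associated to $f$, and a topology is functional Alexandroff if it equals the functional Alexandroff topology of some self-map of $X$. *)

(* Defs.v *)
From mathcomp Require Import all_boot.
Set Implicit Arguments. Unset Strict Implicit. Unset Printing Implicit Defensive.

Section Defs.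
Variable X : finType.

(* A topology on the finite set X, given by its family of open sets.  Since X
   is finite, closure under arbitrary unions is equivalent to containing set0
   and closure under binary unions. *)
Definition is_topology (T : {set {set X}}) : bool :=
  [&& set0 \in T, setT \in T,
      [forall A in T, forall B in T, A :|: B \in T] &
      [forall A in T, forall B in T, A :&: B \in T]].

Definition diag : {set X * X} := [set p | p.1 == p.2].
Definition inv_rel (V : {set X * X}) : {set X * X} := [set p | (p.2, p.1) \in V].
Definition comp_rel (V W : {set X * X}) : {set X * X} :=
  [set p | [exists z, ((p.1, z) \in V) && ((z, p.2) \in W)]].
Definition section (V : {set X * X}) (x : X) : {set X} := [set y | (x, y) \in V].

Definition is_uniformity (U : {set {set X * X}}) : bool :=
  [&& setT \in U,
      [forall V in U, forall W : {set X * X}, (V \subset W) ==> (W \in U)],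
      [forall V in U, forall W in U, V :&: W \in U],
      [forall V in U, diag \subset V],
      [forall V in U, inv_rel V \in U] &
      [forall V in U, exists W in U, comp_rel W W \subset V]].

Definition uniform_topology (U : {set {set X * X}}) : {set {set X}} :=
  [set O : {set X} | [forall x in O, exists V in U, section V x \subset O]].

Definition uniformizable (T : {set {set X}}) : bool :=
  [exists U : {set {set X * X}}, is_uniformity U && (uniform_topology U == T)].

(* V_f(a) = { x | exists n >= 0, f^n(x) = a }; fconnect f x a is the
   reflexive-transitive closure of x |-> f x (cf. lemma fconnect_iter). *)
Definition Vf (f : X -> X) (a : X) : {set X} := [set x | fconnect f x a].

Definition topology_of_basis (B : {set {set X}}) : {set {set X}} :=
  [set O : {set X} | [exists S : {set {set X}}, (S \subset B) && (O == \bigcup_(A in S) A)]].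

Definition functional_alexandroff_topology (f : X -> X) : {set {set X}} :=
  topology_of_basis [set Vf f a | a in X].

Definition functional_alexandroff (T : {set {set X}}) : bool :=
  [exists f : {ffun X -> X}, T == functional_alexandroff_topology f].

End Defs.

Fixpoint bells (n : nat) : seq nat :=
  match n with
  | 0 => [:: 1]
  | k.+1 => let s := bells k in rcons s (\sum_(i < k.+1) 'C(k, i) * nth 0 s i)
  end.
Definition bell (n : nat) : nat := nth 0 (bells n) n.

(* Main.v *)
Require Import Defs.
From mathcomp Require Import all_boot.
Set Implicit Arguments. Unset Strict Implicit. Unset Printing Implicit Defensive.

Lemma size_bells k : size (bells k) = k.+1.
Proof. by elim: k => //= k IH; rewrite size_rcons IH. Qed.

Lemma nth_bells k i : i <= k -> nth 0 (bells k) i = bell i.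
Proof.
elim: k => [|k IH]; first by rewrite leqn0 => /eqP ->.
rewrite leq_eqVlt => /orP[/eqP -> //|lt].
by rewrite /= nth_rcons size_bells lt IH.
Qed.

Lemma bellS k : bell k.+1 = \sum_(i < k.+1) 'C(k, i) * bell i.
Proof.
rewrite /bell /= nth_rcons size_bells ltnn eqxx.
by apply: eq_bigr => i _; rewrite nth_bells // -ltnS.
Qed.

Definition parts (X : finType) (A : {set X}) := [set P : {set {set X}} | partition P A].

Lemma sum_subsets (X : finType) (D : {set X}) (F : nat -> nat) :
  \sum_(C : {set X} | C \subset D) F #|C| = \sum_(j < #|D|.+1) 'C(#|D|, j) * F j.
Proof.
rewrite (partition_big (fun C : {set X} => (inord #|C| : 'I_(#|D|.+1))) xpredT) //=.
apply: eq_bigr => j _.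
transitivity (\sum_(C in [set C : {set X} | C \subset D & #|C| == j]) F j).
  apply: eq_big => C; rewrite ?inE.
    case sub: (C \subset D) => //=.
    have le : #|C| <= #|D| by apply: subset_leq_card.
    apply/eqP/eqP => [<-|e]; first by rewrite inordK.
    by apply: val_inj; rewrite /= inordK // e.
  move=> /andP[sub /eqP <-]; by rewrite inordK // ltnS subset_leq_card.
by rewrite sum_nat_const cards_draws.
Qed.

Lemma fiber (X : finType) (A C : {set X}) x : x \in A -> C \subset A :\ x ->
  #|[set P in parts A | A :\: pblock P x == C]| = #|parts C|.
Proof.
move=> xA CA.
have CA' : C \subset A by apply: subset_trans CA (subsetDl _ _).
have xC : x \notin C by apply/negP => /(subsetP CA); rewrite !inE eqxx.
set B := A :\: C.
have xB : x \in B by rewrite !inE xC.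
have BnQ : forall Q, Q \in parts C -> B \notin Q.
  move=> Q; rewrite inE => pQ; apply/negP => BQ.
  by move: (subsetP (partitionS pQ BQ) x xB); rewrite (negbTE xC).
have -> : [set P in parts A | A :\: pblock P x == C] = (fun Q => B |: Q) @: parts C.
  apply/setP => P; rewrite !inE; apply/andP/imsetP.
  - move=> [pA /eqP eC].
    have cP := cover_partition pA.
    have tP := partition_trivIset pA.
    have xc : x \in cover P by rewrite cP.
    have BP := pblock_mem xc.
    have sB := partitionS pA BP.
    have eB : B = pblock P x by rewrite /B -eC setDDr setDv set0U; apply/setIidPr.
    exists (P :\ pblock P x); first by rewrite inE -eC; apply: partitionD1.
    by rewrite eB setD1K.
  - move=> [Q]; rewrite inE => pQ ->.
    have hA : B :|: C = A by apply/setP => y; rewrite !inE; case yC: (y \in C) => /=;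
      [rewrite (subsetP CA') | rewrite orbF].
    have hp : partition (B |: Q) (B :|: C).
      apply: partitionU1 => //; first by apply/set0Pn; exists x.
      rewrite -setI_eq0 /B; apply/eqP/setP => y; rewrite !inE.
      by case: (y \in C); rewrite ?andbF.
    rewrite -hA hp; split => //.
    rewrite (def_pblock (partition_trivIset hp) (setU11 _ _) xB).
    by rewrite hA /B setDDr setDv set0U; apply/eqP/setIidPr.
apply: card_in_imset => Q1 Q2 h1 h2 e.
by rewrite -(setU1K (BnQ _ h1)) e setU1K // BnQ.
Qed.

Lemma card_parts (X : finType) (A : {set X}) : #|parts A| = bell #|A|.
Proof.
have [n le] := ubnP #|A|; elim: n A le => // n IH A le.
have [->|[x xA]] := set_0Vmem A.
  rewrite cards0 /bell /=.
  have -> : parts (set0 : {set X}) = [set set0].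
    by apply/setP => P; rewrite !inE partition_set0.
  by rewrite cards1.
have kA := cardsD1 x A; rewrite xA /= in kA.
rewrite kA bellS -sum1_card.
rewrite (partition_big (fun P => A :\: pblock P x) (fun C => C \subset A :\ x)) /=; last first.
  move=> P; rewrite inE => pA; apply/subsetP => y; rewrite !inE => /andP[yB ->].
  rewrite andbT; apply: contraNneq yB => ->.
  by rewrite mem_pblock (cover_partition pA).
rewrite -sum_subsets; apply: eq_bigr => C CA.
rewrite -IH; last first.
  apply: leq_ltn_trans (subset_leq_card CA) _; by move: le; rewrite kA.
rewrite -(fiber xA CA) -sum1_card; apply: eq_bigl => P; by rewrite !inE.
Qed.

Definition top (X : finType) (P : {set {set X}}) : {set {set X}} :=
  [set O : {set X} | [forall x in O, pblock P x \subset O]].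

Lemma pb_refl (X : finType) (P : {set {set X}}) x :
  partition P setT -> x \in pblock P x.
Proof. by move=> pP; rewrite mem_pblock (cover_partition pP) inE. Qed.

Lemma pb_sym (X : finType) (P : {set {set X}}) x y :
  partition P setT -> y \in pblock P x -> x \in pblock P y.
Proof.
move=> pP h; rewrite (same_pblock (partition_trivIset pP) h); exact: pb_refl.
Qed.

Lemma pb_same (X : finType) (P : {set {set X}}) x y :
  partition P setT -> y \in pblock P x -> pblock P y = pblock P x.
Proof. by move=> pP h; rewrite (same_pblock (partition_trivIset pP) h). Qed.

Lemma pb_top (X : finType) (P : {set {set X}}) x :
  partition P setT -> pblock P x \in top P.
Proof.
move=> pP; rewrite inE; apply/forall_inP => y yx; by rewrite (pb_same pP yx).
Qed.

Lemma top_inj (X : finType) (P Q : {set {set X}}) :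
  partition P setT -> partition Q setT -> top P = top Q -> P = Q.
Proof.
have H : forall P Q : {set {set X}}, partition P setT -> partition Q setT ->
    top P = top Q -> P \subset Q.
  move=> P1 Q1 pP pQ e; apply/subsetP => B BP.
  have /set0Pn[x xB] := partition_neq0 pP BP.
  have eB := def_pblock (partition_trivIset pP) BP xB.
  have h1 : pblock Q1 x \in top P1 by rewrite e pb_top.
  have h2 : pblock P1 x \in top Q1 by rewrite -e pb_top.
  move: h1 h2; rewrite !inE => /forall_inP h1 /forall_inP h2.
  have s1 := h1 x (pb_refl x pQ).
  have s2 := h2 x (pb_refl x pP).
  have -> : B = pblock Q1 x by rewrite -eB; apply/eqP; rewrite eqEsubset s1 s2.
  by apply: pblock_mem; rewrite (cover_partition pQ) inE.
move=> pP pQ e; apply/eqP; rewrite eqEsubset !H //.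
Qed.

Lemma top_topology (X : finType) (P : {set {set X}}) : is_topology (top P).
Proof.
rewrite /is_topology !inE; apply/and4P; split.
- by apply/forall_inP => x; rewrite inE.
- by apply/forall_inP => x _; apply: subsetT.
- apply/forall_inP => A; rewrite inE => /forall_inP hA.
  apply/forall_inP => B; rewrite inE => /forall_inP hB.
  rewrite inE; apply/forall_inP => x; rewrite inE => /orP[xA|xB].
    by apply: subset_trans (hA x xA) (subsetUl _ _).
  by apply: subset_trans (hB x xB) (subsetUr _ _).
- apply/forall_inP => A; rewrite inE => /forall_inP hA.
  apply/forall_inP => B; rewrite inE => /forall_inP hB.
  rewrite inE; apply/forall_inP => x; rewrite inE => /andP[xA xB].
  by rewrite subsetI hA ?hB.
Qed.

Lemma unif_top_eq (X : finType) (U : {set {set X * X}}) (E : {set X * X}) (P : {set {set X}}) :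
  E \in U -> (forall V, V \in U -> E \subset V) ->
  (forall x, section E x = pblock P x) ->
  uniform_topology U = top P.
Proof.
move=> EU Emin hs; apply/setP => O; rewrite !inE.
apply/forall_inP/forall_inP => h x xO.
  have /exists_inP[V VU sV] := h x xO.
  rewrite -hs; apply: subset_trans sV; apply/subsetP => y; rewrite !inE.
  exact: (subsetP (Emin V VU)).
by apply/exists_inP; exists E => //; rewrite hs h.
Qed.

Lemma top_unif (X : finType) (P : {set {set X}}) :
  partition P setT -> uniformizable (top P).
Proof.
move=> pP.
set E : {set X * X} := [set p | p.2 \in pblock P p.1].
apply/existsP; exists [set V : {set X * X} | E \subset V]; apply/andP; split; last first.
  apply/eqP; apply: (unif_top_eq (E:=E)); first by rewrite inE.
    by move=> V; rewrite inE.
  by move=> x; apply/setP => y; rewrite !inE.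
rewrite /is_uniformity; apply/andP; split; first by rewrite inE subsetT.
apply/and5P; split.
- apply/forall_inP => V; rewrite inE => EV; apply/forallP => W; apply/implyP => VW.
  by rewrite inE (subset_trans EV VW).
- apply/forall_inP => V; rewrite inE => EV; apply/forall_inP => W; rewrite inE => EW.
  by rewrite inE subsetI EV EW.
- apply/forall_inP => V; rewrite inE => EV; apply: subset_trans EV.
  apply/subsetP => [[a b]]; rewrite !inE /= => /eqP <-; exact: pb_refl.
- apply/forall_inP => V; rewrite inE => EV; rewrite inE.
  apply/subsetP => [[a b]]; rewrite !inE /= => h.
  by apply: (subsetP EV); rewrite inE /=; apply: pb_sym.
- apply/forall_inP => V; rewrite inE => EV; apply/exists_inP; exists E; first by rewrite inE.
  apply: subset_trans EV; apply/subsetP => [[a b]]; rewrite !inE /=.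
  case/existsP => z /andP[]; rewrite !inE /= => az zb.
  by rewrite -(pb_same pP az).
Qed.

Lemma unif_top (X : finType) (T : {set {set X}}) :
  uniformizable T -> exists2 P, partition P setT & T = top P.
Proof.
case/existsP => U /andP[hU /eqP <-].
move: hU; rewrite /is_uniformity => /andP[TU /and5P[hup hI hd hinv hc]].
set E := \bigcap_(V in U) V.
have EU : E \in U.
  apply: (big_ind (fun V => V \in U)) => //.
  by move=> V W VU WU; move/forall_inP: hI => /(_ V VU) /forall_inP; apply.
have Emin : forall V, V \in U -> E \subset V by move=> V VU; apply: bigcap_inf.
pose R x y := (x, y) \in E.
have Rrefl : forall x, R x x.
  by move=> x; move/forall_inP: hd => /(_ E EU) /subsetP; apply; rewrite inE.
have Rsym : forall x y, R x y -> R y x.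
  move=> x y h; move/forall_inP: hinv => /(_ E EU) /Emin /subsetP /(_ (x, y) h).
  by rewrite inE.
have Rtrans : forall x y z, R x y -> R y z -> R x z.
  move=> x y z h1 h2.
  move/forall_inP: hc => /(_ E EU) /exists_inP[W WU sW].
  apply: (subsetP sW); rewrite inE; apply/existsP; exists y.
  by rewrite /= (subsetP (Emin W WU) _ h1) (subsetP (Emin W WU) _ h2).
have eqR : {in [set: X] & &, equivalence_rel R}.
  move=> x y z _ _ _; split; first exact: Rrefl.
  move=> xy; apply/idP/idP => [xz|yz]; first exact: Rtrans (Rsym _ _ xy) xz.
  exact: Rtrans xy yz.
exists (equivalence_partition R setT); first exact: equivalence_partitionP.
apply: (unif_top_eq (E:=E)) => // x; apply/setP => y.
by rewrite inE pblock_equivalence_partition ?inE.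
Qed.

Lemma top_fa (X : finType) (P : {set {set X}}) :
  partition P setT -> functional_alexandroff (top P).
Proof.
move=> pP.
pose f := [ffun x => next (enum (pblock P x)) x].
have Vfe : forall a, Vf f a = pblock P a.
  move=> a; apply/setP => x; rewrite inE.
  have cyc : fcycle f (enum (pblock P x)).
    rewrite (@eq_in_cycle _ (mem (enum (pblock P x))) _ (frel (next (enum (pblock P x))))).
      exact: cycle_next (enum_uniq _).
      move=> y z; rewrite !mem_enum => yx _ /=; by rewrite ffunE (pb_same pP yx).
    by apply/allP => y.
  have xin : x \in enum (pblock P x) by rewrite mem_enum pb_refl.
  rewrite (fconnect_cycle cyc xin) mem_enum.
  by apply/idP/idP; apply: pb_sym.
apply/existsP; exists f; apply/eqP/setP => O; rewrite !inE.
apply/forall_inP/existsP => [h | [S /andP[SB /eqP ->]] x].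
  exists [set B in [set Vf f a | a in X] | B \subset O]; apply/andP; split.
    by apply/subsetP => B; rewrite inE => /andP[].
  apply/eqP/setP => y; apply/idP/bigcupP => [yO | [B]].
    exists (pblock P y); last exact: pb_refl.
    by rewrite !inE -Vfe imset_f // Vfe h.
  by rewrite !inE => /andP[_ BO] /(subsetP BO).
case/bigcupP => B BS xB.
have /imsetP[a _ eB] := subsetP SB B BS.
rewrite eB Vfe in xB.
rewrite (pb_same pP xB) -Vfe -eB; exact: bigcup_sup.
Qed.

Lemma charact (X : finType) (T : {set {set X}}) :
  (is_topology T && uniformizable T) = (T \in (@top X) @: parts [set: X]).
Proof.
apply/andP/imsetP => [[_ /unif_top [P pP ->]] | [P]].
  by exists P => //; rewrite inE.
rewrite inE => pP ->; split; [exact: top_topology | exact: top_unif].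
Qed.

Theorem mainTheorem6 (X : finType) (n : nat) (hn : 1 <= n) (hX : #|X| = n) :
  #|[set T : {set {set X}} | is_topology T && uniformizable T]| = bell n /\
  #|[set T : {set {set X}} | [&& is_topology T, uniformizable T
                                 & functional_alexandroff T]]| = bell n.
Proof.
have e1 : [set T : {set {set X}} | is_topology T && uniformizable T] = (@top X) @: parts [set: X].
  by apply/setP => T; rewrite inE charact.
have e2 : [set T : {set {set X}} | [&& is_topology T, uniformizable T
                                 & functional_alexandroff T]] = (@top X) @: parts [set: X].
  apply/setP => T; rewrite inE andbA charact.
  apply/andP/idP => [[] //| h]; split => //.
  by case/imsetP: h => P; rewrite inE => pP ->; apply: top_fa.
have c : #|(@top X) @: parts [set: X]| = bell n.
  rewrite card_in_imset; first by rewrite card_parts cardsT hX.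
  by move=> P Q; rewrite !inE => pP pQ; apply: top_inj.
by rewrite e1 e2 c.
Qed.
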